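(* Let $c\ge2$, let $\Gamma=(V,E)$ be a $c$-uniform unoriented hypergraph with no isolated vertices, let $k\ge2$ and let $V_1,\dots,V_k$ be the color classes of a proper strong $k$-coloring of $\Gamma$. Then the functions $g_{ij}$ (for all distinct $i,j$) are eigenfunctions of the normalized Laplacian $L$ if and only if for all $i=1,\dots,k$ and all $v\in V$, \[ \bigl|\{e\in E: v\in e,\ e\cap V_i\neq\varnothing\}\bigr|=\begin{cases}\dfrac{(c-1)\deg v}{k-1}, & v\notin V_i,\\[2mm] \deg v, & v\in V_i.\end{cases} \] In this case the corresponding eigenvalue is $\dfrac{k-c}{k-1}$.
   Context: A hypergraph has finite vertex set $V$ and edge set $E\subseteq\mathcal P(V)$; it is $c$-uniform if $|e|=c$ for all $e$, and unoriented means all incidences have orientation $+1$. $\deg v=|\{e\in E: v\in e\}|\ge1$, $D=\mathrm{diag}(\deg v)$, adjacency $A_{v,v}=0$ and $A_{v,w}=-|\{e\in E: v,w\in e\}|$ for $v\ne w$, normalized Laplacian $L=\mathrm{Id}-D^{-1}A$. A proper strong $k$-coloring is a map $V\to\{1,\dots,k\}$ such that any two distinct vertices in a common edge receive different colors. For color classes $V_1,\dots,V_k$ and distinct $i,j$, $g_{ij}(w)=1$ if $w\in V_i$, $-1$ if $w\in V_j$, $0$ otherwise. *)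

(* Defs.v *)
From mathcomp Require Import all_boot all_order all_algebra.
From mathcomp Require Import reals.
Set Implicit Arguments. Unset Strict Implicit. Unset Printing Implicit Defensive.
Import Order.TTheory GRing.Theory Num.Theory.
Local Open Scope ring_scope.

Definition c_uniform (V : finType) (E : {set {set V}}) (c : nat) : Prop :=
  forall e, e \in E -> #|e| = c.

Definition hdeg (V : finType) (E : {set {set V}}) (v : V) : nat :=
  #|[set e in E | v \in e]|.

Definition no_isolated (V : finType) (E : {set {set V}}) : Prop :=
  forall v, (1 <= hdeg E v)%N.

Definition hadj (R : ringType) (V : finType) (E : {set {set V}}) (v w : V) : R :=
  if v == w then 0 else - (#|[set e in E | (v \in e) && (w \in e)]|%:R).

Definition hlap (R : fieldType) (V : finType) (E : {set {set V}}) (f : V -> R) (v : V) : R :=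
  f v - (hdeg E v)%:R^-1 * \sum_(w : V) hadj R E v w * f w.

Definition eigenfunction (R : fieldType) (V : finType) (E : {set {set V}}) (f : V -> R) : Prop :=
  (exists v, f v != 0) /\ exists lambda : R, forall v, hlap E f v = lambda * f v.

Definition proper_strong_coloring (V : finType) (E : {set {set V}}) (k : nat)
  (col : V -> 'I_k) : Prop :=
  forall e v w, e \in E -> v \in e -> w \in e -> v != w -> col v != col w.

Definition color_class (V : finType) (k : nat) (col : V -> 'I_k) (i : 'I_k) : {set V} :=
  [set v | col v == i].

Definition gfun (R : ringType) (V : finType) (k : nat) (col : V -> 'I_k) (i j : 'I_k) (w : V) : R :=
  if w \in color_class col i then 1 else if w \in color_class col j then -1 else 0.

Definition meet_count (V : finType) (E : {set {set V}}) (k : nat) (col : V -> 'I_k)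
  (i : 'I_k) (v : V) : nat :=
  #|[set e in E | (v \in e) && (e :&: color_class col i != set0)]|.

(* Main.v *)
Require Import Defs.
From mathcomp Require Import all_boot all_order all_algebra.
From mathcomp Require Import reals.
Import Order.TTheory GRing.Theory Num.Theory.
Set Implicit Arguments. Unset Strict Implicit.

Lemma card_meet1 (V : finType) (E : {set {set V}}) (k : nat) (col : V -> 'I_k) e i :
  proper_strong_coloring E col -> e \in E ->
  #|e :&: color_class col i| = (e :&: color_class col i != set0).
Proof.
move=> Hp He.
case: (set_0Vmem (e :&: color_class col i)) => [->|[x Hx]]; first by rewrite cards0 eqxx.
have -> : (e :&: color_class col i != set0) by apply/set0Pn; exists x.
apply/eqP; rewrite eqn_leq; apply/andP; split; last by apply/card_gt0P; exists x.
apply/card_le1P => a Ha b; apply/idP/idP => Hb; last by rewrite inE in Hb; rewrite (eqP Hb).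
rewrite inE; apply/negPn/negP => ab.
move: Ha Hb; rewrite !inE => /andP[ae ac] /andP[be bc].
by have := Hp e b a He be ae ab; rewrite (eqP ac) (eqP bc) eqxx.
Qed.

Lemma dcount (V : finType) (E : {set {set V}}) (k : nat) (col : V -> 'I_k) i v :
  proper_strong_coloring E col ->
  (\sum_(w | col w == i) #|[set e in E | (v \in e) && (w \in e)]| =
   \sum_(e | (e \in E) && (v \in e)) (e :&: color_class col i != set0 : nat))%N.
Proof.
move=> Hp.
under eq_bigr => w _ do rewrite -sum1_card.
rewrite (exchange_big_dep (fun e => (e \in E) && (v \in e))) /=; last first.
  by move=> w e _; rewrite !inE => /and3P[-> -> _].
apply: eq_bigr => e /andP[He ve].
rewrite -(card_meet1 i Hp He) -sum1_card.
apply: eq_bigl => w; rewrite !inE He ve /=; by rewrite andbC.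
Qed.

Lemma meet_sum (V : finType) (E : {set {set V}}) (k : nat) (col : V -> 'I_k) i v :
  meet_count E col i v =
   (\sum_(e | (e \in E) && (v \in e)) (e :&: color_class col i != set0 : nat))%N.
Proof.
rewrite /meet_count -sum1_card [RHS]big_mkcond [LHS]big_mkcond; apply: eq_bigr => e _.
by rewrite !inE; case: (e \in E); case: (v \in e); case: (_ != set0).
Qed.

Lemma meet_self (V : finType) (E : {set {set V}}) (k : nat) (col : V -> 'I_k) i v :
  col v == i -> meet_count E col i v = hdeg E v.
Proof.
move=> cv; rewrite /meet_count /hdeg; apply: eq_card => e; rewrite !inE.
case: (e \in E); case ve: (v \in e) => //=; apply/set0Pn; exists v.
by rewrite !inE ve.
Qed.

Local Open Scope ring_scope.
Lemma T_i (R : ringType) (V : finType) (E : {set {set V}}) (k : nat) (col : V -> 'I_k) i v :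
  proper_strong_coloring E col ->
  \sum_(w | col w == i) hadj R E v w =
  - (if col v == i then 0 else (meet_count E col i v)%:R).
Proof.
move=> Hp; case: ifP => cv.
  rewrite oppr0; apply: big1 => w cw; rewrite /hadj; case: eqP => // /eqP vw.
  suff -> : [set e in E | (v \in e) && (w \in e)] = set0 by rewrite cards0 oppr0.
  apply/setP => e; rewrite !inE; apply/negP => /and3P[He ve we].
  by have := Hp e v w He ve we vw; rewrite (eqP cw) cv.
rewrite meet_sum -(dcount _ _ Hp) natr_sum -sumrN; apply: eq_bigr => w cw.
rewrite /hadj; case: eqP => // vw; by rewrite vw (eqP cw) eqxx in cv.
Qed.

Lemma sum_meet (V : finType) (E : {set {set V}}) (c k : nat) (col : V -> 'I_k) v :
  proper_strong_coloring E col -> c_uniform E c ->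
  (\sum_(j : 'I_k) meet_count E col j v = c * hdeg E v)%N.
Proof.
move=> Hp Hu.
under eq_bigr => j _ do rewrite meet_sum.
rewrite exchange_big /= /hdeg -sum1_card big_distrr /= [RHS]big_mkcond [LHS]big_mkcond.
apply: eq_bigr => e _; rewrite inE; case: ifP => // /andP[He ve].
rewrite muln1 -(Hu e He) -sum1_card.
rewrite sum1_card.
have -> : (\sum_(i < k) (e :&: color_class col i != set0) = #|[set j | e :&: color_class col j != set0]|)%N.
  by rewrite -sum1_card [RHS]big_mkcond; apply: eq_bigr => j _; rewrite inE; case: ifP.
have -> : [set j | e :&: color_class col j != set0] = col @: e.
  apply/setP => j; rewrite !inE; apply/set0Pn/imsetP => [[x]|[x xe ->]].
    by rewrite !inE => /andP[xe /eqP <-]; exists x.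
  by exists x; rewrite !inE xe eqxx.
rewrite card_in_imset // => x y xe ye cxy; apply/eqP; apply: contraT => xy.
by have := Hp e x y He xe ye xy; rewrite cxy eqxx.
Qed.

From mathcomp Require Import ring.

Lemma hlap_g (R : fieldType) (V : finType) (E : {set {set V}}) (k : nat) (col : V -> 'I_k) i j v :
  proper_strong_coloring E col -> i != j ->
  hlap E (gfun R col i j) v = gfun R col i j v + (hdeg E v)%:R^-1 *
   ((if col v == i then 0 else (meet_count E col i v)%:R) -
    (if col v == j then 0 else (meet_count E col j v)%:R)).
Proof.
move=> Hp ij.
have gE : forall w, gfun R col i j w = (col w == i)%:R - (col w == j)%:R.
  move=> w; rewrite /gfun !inE; case: (eqVneq (col w) i) => [->|Hn] /=.
    by rewrite (negbTE ij) subr0.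
  by case: (col w == j) => /=; rewrite ?sub0r ?oppr0.
rewrite /hlap.
have -> : \sum_w hadj R E v w * gfun R col i j w =
   \sum_(w | col w == i) hadj R E v w - \sum_(w | col w == j) hadj R E v w.
  rewrite (big_mkcond (fun w => col w == i)) (big_mkcond (fun w => col w == j)) -sumrB.
  by apply: eq_bigr => w _; rewrite gE; case: (col w == i); case: (col w == j) => /=; ring.
rewrite !T_i //; move: (gfun _ _ _ _ _) (hdeg E v)%:R^-1 (if _ then _ else _) (if col v == j then _ else _) => a b x y; ring.
Qed.

Lemma fld1 (F : fieldType) (d kk cc : F) : d != 0 -> kk - 1 != 0 ->
  1 + d^-1 * (0 - (cc - 1) * d / (kk - 1)) = (kk - cc) / (kk - 1) * 1.
Proof. by move=> dn kn; field; rewrite kn dn. Qed.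
Lemma fld2 (F : fieldType) (d kk cc : F) : d != 0 -> kk - 1 != 0 ->
  -1 + d^-1 * ((cc - 1) * d / (kk - 1) - 0) = (kk - cc) / (kk - 1) * -1.
Proof. by move=> dn kn; field; rewrite kn dn. Qed.

Theorem mainTheorem9 (R : realType) (V : finType) (E : {set {set V}}) (c k : nat)
  (col : V -> 'I_k) :
  (0 < #|V|)%N -> (2 <= c)%N -> c_uniform E c -> no_isolated E -> (2 <= k)%N ->
  proper_strong_coloring E col ->
  ((forall i j : 'I_k, i != j -> eigenfunction E (gfun R col i j)) <->
   (forall (i : 'I_k) (v : V),
       (meet_count E col i v)%:R =
       (if v \in color_class col i then (hdeg E v)%:R
        else ((c%:R - 1) * (hdeg E v)%:R / (k%:R - 1) : R))))
  /\
  ((forall (i : 'I_k) (v : V),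
       (meet_count E col i v)%:R =
       (if v \in color_class col i then (hdeg E v)%:R
        else ((c%:R - 1) * (hdeg E v)%:R / (k%:R - 1) : R))) ->
   forall i j : 'I_k, i != j -> forall v : V,
     hlap E (gfun R col i j) v = ((k%:R - c%:R) / (k%:R - 1)) * gfun R col i j v).
Proof.
move=> H0 Hc Hu Hn Hk Hp.
have d0 : forall v, (hdeg E v)%:R != 0 :> R by move=> v; rewrite pnatr_eq0 -lt0n Hn.
have kE : k%:R = (k.-1)%:R + 1 :> R by rewrite -{1}(prednK (ltnW Hk)) -mulrSr.
have k0 : (k%:R - 1) != 0 :> R.
  by rewrite kE addrK pnatr_eq0 -lt0n -ltnS (prednK (ltnW Hk)).
have c0 : (c%:R - 1) != 0 :> R.
  have cE : c%:R = (c.-1)%:R + 1 :> R by rewrite -{1}(prednK (ltnW Hc)) -mulrSr.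
  by rewrite cE addrK pnatr_eq0 -lt0n -ltnS (prednK (ltnW Hc)).
set P := forall (i : 'I_k) (v : V), _.
have part2 : P -> forall i j : 'I_k, i != j -> forall v : V,
     hlap E (gfun R col i j) v = ((k%:R - c%:R) / (k%:R - 1)) * gfun R col i j v.
  move=> HP i j ij v; rewrite hlap_g // /gfun !inE.
  have Hi := HP i v; have Hj := HP j v; rewrite !inE in Hi Hj.
  case: (eqVneq (col v) i) => [cvi|cvi].
    have cvj : col v != j by rewrite cvi.
    rewrite (negbTE cvj) in Hj *; rewrite Hj.
    exact: fld1.
  case: (eqVneq (col v) j) => [cvj|cvj].
    rewrite (negbTE cvi) in Hi; rewrite Hi; exact: fld2.
  rewrite (negbTE cvi) in Hi; rewrite (negbTE cvj) in Hj.
  by rewrite Hi Hj subrr mulr0 mulr0 addr0.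
split=> //; split.
- move=> H i v; rewrite inE; case: ifP => cv; first by rewrite meet_self.
  set l := col v.
  have eqm : forall j, j != l -> (meet_count E col j v)%:R = (meet_count E col i v)%:R :> R.
    move=> j jl; case: (eqVneq j i) => [->//|ji].
    have ij : i != j by rewrite eq_sym.
    have [_ [lam Hl]] := H i j ij.
    have cj : col v != j by rewrite eq_sym.
    have := Hl v; rewrite hlap_g //.
    rewrite cv (negbTE cj) /gfun !inE cv (negbTE cj) add0r mulr0 => /eqP.
    by rewrite mulf_eq0 invr_eq0 (negbTE (d0 v)) /= subr_eq0 => /eqP ->.
  have Hs : \sum_(j < k) (meet_count E col j v)%:R = c%:R * (hdeg E v)%:R :> R.
    by rewrite -natr_sum (sum_meet _ Hp Hu) natrM.
  rewrite (bigD1 l) //= meet_self // in Hs.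
  rewrite (eq_bigr (fun _ => (meet_count E col i v)%:R)) in Hs; last by move=> j; exact: eqm.
  rewrite sumr_const cardC1 card_ord -(mulr_natr _ k.-1) in Hs.
  have Hx : (meet_count E col i v)%:R * (k%:R - 1) = (c%:R - 1) * (hdeg E v)%:R :> R.
    by rewrite kE addrK mulrBl mul1r -Hs addrAC subrr add0r.
  by rewrite -Hx mulfK.
- move=> HP i j ij; split; last by exists ((k%:R - c%:R) / (k%:R - 1)); exact: part2.
  case: (pickP (fun w => col w == i)) => [w cw|none].
    by exists w; rewrite /gfun inE cw; exact: oner_neq0.
  exfalso; case/card_gt0P: H0 => v0 _.
  have := HP i v0; rewrite inE none.
  have C0 : color_class col i = set0 by apply/setP => x; rewrite !inE none.
  rewrite /meet_count C0.
  have -> : [set e in E | (v0 \in e) && (e :&: set0 != set0)] = set0.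
    by apply/setP => e; rewrite !inE setI0 eqxx /= !andbF.
  rewrite cards0 => /esym /eqP.
  by rewrite !mulf_eq0 invr_eq0 (negbTE c0) (negbTE (d0 v0)) (negbTE k0).
Qed.
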